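(* Let $X$ be a unital commutative semiring which is idempotent, linearly ordered by its intrinsic order, and such that for all $a,b,x\in X$ with $a<b$ one has $ax=0$ or $ax<bx$. The following are equivalent: (1) $\tilde{\mathcal{S}}(X)$ is fully elementary; (2) $\tilde{\mathcal{S}}(X)$ is Frobenius; (3) $X=\{0\}$.
   Context: A semiring $(X,+,0,\cdot)$: $(X,+,0)$ commutative monoid, $(X,\cdot)$ semigroup, distributivity, $0$ absorbing. Idempotent: $x+x=x$. Intrinsic order: $a\le b$ iff $a+x=b$ for some $x$; $a<b$ means $a\le b$, $a\ne b$. $\mathcal{S}(X)=X\times X$ with $(a',a'')+(b',b'')=(a'+b',a''+b'')$, $(a',a'')(b',b'')=(a'b'+a''b'',a'b''+a''b')$. Relation: $(a',a'')\sim(b',b'')$ iff $(a',a'')=(b',b'')$ or ($a'\ne a''$, $b'\ne b''$, $a'+b''=a''+b'$). Under the hypotheses $\sim$ is a congruence and $\tilde{\mathcal{S}}(X)=\mathcal{S}(X)/\sim$ is a unital commutative semiring. A unital commutative semiring $Y$ is Frobenius if $(x+y)^n=x^n+y^n$ for all $x,y\in Y$, $n\ge1$; polynomials over $Y$ are functions represented by formal expressions $\sum_k a_k\prod_j x_j^{d_{k,j}}$; symmetric if represented by an expression closed (with coefficients) under permuting variables; $e_j$ is the sum of all products of $j$ distinct variables; $Y$ is fully elementary if for every $n$ every symmetric polynomial in $n$ variables equals $r(e_1,\dots,e_n)$ on $Y^n$ for some polynomial $r$. *)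

(* Defs.v *)
From HB Require Import structures.
From mathcomp Require Import all_boot all_order all_algebra all_fingroup.
Set Implicit Arguments. Unset Strict Implicit. Unset Printing Implicit Defensive.
Import GRing.Theory.
Local Open Scope ring_scope.

Section Semiring.
Variable X : comPzSemiRingType.

Definition ile (a b : X) : Prop := exists x, a + x = b.
Definition ilt (a b : X) : Prop := ile a b /\ a <> b.

Definition idempotent_sr : Prop := forall x : X, x + x = x.
Definition linear_intrinsic : Prop := forall a b : X, ile a b \/ ile b a.
Definition mono_cond : Prop :=
  forall a b x : X, ilt a b -> a * x = 0 \/ ilt (a * x) (b * x).

(* S(X) = X x X, represented by pairs *)
Definition spair := (X * X)%type.
Definition szero : spair := (0, 0).
Definition sone : spair := (1, 0).
Definition sadd (p q : spair) : spair := (p.1 + q.1, p.2 + q.2).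
Definition smul (p q : spair) : spair :=
  (p.1 * q.1 + p.2 * q.2, p.1 * q.2 + p.2 * q.1).
Fixpoint spow (p : spair) (n : nat) : spair :=
  if n is m.+1 then smul p (spow p m) else sone.

(* the relation ~ ; equality in the quotient S~(X) *)
Definition ssim (p q : spair) : Prop :=
  p = q \/ (p.1 <> p.2 /\ q.1 <> q.2 /\ p.1 + q.2 = p.2 + q.1).

Definition ssum (s : seq spair) : spair := foldr sadd szero s.
Definition sprod (s : seq spair) : spair := foldr smul sone s.

Definition frobenius : Prop :=
  forall (x y : spair) (n : nat), (1 <= n)%N ->
    ssim (spow (sadd x y) n) (sadd (spow x n) (spow y n)).

(* formal polynomial expressions in n variables over S~(X):
   a list of terms (coefficient, exponent vector) *)
Definition sterm (n : nat) := (spair * {ffun 'I_n -> nat})%type.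
Definition sexpr (n : nat) := seq (sterm n).

Definition eval_term n (t : sterm n) (v : 'I_n -> spair) : spair :=
  smul t.1 (sprod [seq spow (v j) (t.2 j) | j <- enum 'I_n]).
Definition eval_expr n (P : sexpr n) (v : 'I_n -> spair) : spair :=
  ssum [seq eval_term t v | t <- P].

Definition perm_term n (s : 'S_n) (t : sterm n) : sterm n :=
  (t.1, [ffun j => t.2 (s j)]).

Definition sym_expr n (P : sexpr n) : Prop :=
  forall s : 'S_n, perm_eq [seq perm_term s t | t <- P] P.

Definition elem n (j : nat) (v : 'I_n -> spair) : spair :=
  ssum (map (fun A : {set 'I_n} => sprod [seq v i | i in A])
         (enum [set A : {set 'I_n} | #|A| == j])).

Definition fully_elementary : Prop :=
  forall (n : nat) (P : sexpr n), sym_expr P ->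
    exists r : sexpr n, forall v : 'I_n -> spair,
      ssim (eval_expr P v) (eval_expr r (fun j : 'I_n => elem j.+1 v)).

End Semiring.

(* Main.v *)
Require Import Defs.
From mathcomp Require Import all_boot all_order all_algebra all_fingroup ring.
Local Open Scope ring_scope.
Import GRing.Theory.

Section Aux.
Variable X : comPzSemiRingType.
Hypothesis Hidem : idempotent_sr X.

Lemma spairP (p q : spair X) : p.1 = q.1 -> p.2 = q.2 -> p = q.
Proof. by case: p q => [a b] [c d] /= -> ->. Qed.

Definition sle (p q : spair X) := exists g, q = sadd p g.

Lemma sle_refl p : sle p p.
Proof. exists (szero X); apply: spairP => /=; ring. Qed.

Lemma sle0 p : sle (szero X) p.
Proof. exists p; apply: spairP => /=; ring. Qed.

Lemma sle_add p q p' q' : sle p q -> sle p' q' -> sle (sadd p p') (sadd q q').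
Proof.
move=> [g ->] [h ->]; exists (sadd g h); apply: spairP => /=; ring.
Qed.

Lemma sle_mul p q p' q' : sle p q -> sle p' q' -> sle (smul p p') (smul q q').
Proof.
move=> [g ->] [h ->].
exists (sadd (smul p h) (sadd (smul g p') (smul g h))); apply: spairP => /=; ring.
Qed.

Lemma sle_pow p q k : sle p q -> sle (spow p k) (spow q k).
Proof. move=> H; elim: k => [|k IH] /=; [exact: sle_refl| exact: sle_mul]. Qed.

Lemma sle_sprod (T : Type) (s : seq T) (f g : T -> spair X) :
  (forall j, sle (f j) (g j)) -> sle (sprod (map f s)) (sprod (map g s)).
Proof. move=> H; elim: s => [|a s IH] /=; [exact: sle_refl | exact: sle_mul]. Qed.

Lemma sle_ssum (T : Type) (s : seq T) (f g : T -> spair X) :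
  (forall j, sle (f j) (g j)) -> sle (ssum (map f s)) (ssum (map g s)).
Proof. move=> H; elim: s => [|a s IH] /=; [exact: sle_refl | exact: sle_add]. Qed.

Lemma sle_eval n (r : sexpr X n) (e1 e2 : 'I_n -> spair X) :
  (forall j, sle (e1 j) (e2 j)) -> sle (eval_expr r e1) (eval_expr r e2).
Proof.
move=> H; rewrite /eval_expr; apply: sle_ssum => t.
rewrite /eval_term; apply: sle_mul; first exact: sle_refl.
apply: sle_sprod => j; exact: sle_pow.
Qed.

Lemma ssumE (s : seq (spair X)) :
  ssum s = (\sum_(p <- s) p.1, \sum_(p <- s) p.2).
Proof.
elim: s => [|a s IH] /=; first by rewrite !big_nil.
by rewrite IH !big_cons.
Qed.

Lemma ssum_perm (s t : seq (spair X)) : perm_eq s t -> ssum s = ssum t.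
Proof. by move=> H; rewrite !ssumE; congr pair; apply: perm_big. Qed.

Lemma I2cases (x : 'I_2) : x = ord0 \/ x = ord_max.
Proof.
case: x => [[|[|m]] Hm]; [left|right|by []]; exact: val_inj.
Qed.

Lemma enumI2 : enum 'I_2 = [:: ord0; ord_max].
Proof. rewrite enum_ordSl enum_ordSl enum_ord0 /=. congr (_ :: _ :: _); apply: val_inj => //. Qed.

Lemma ord0_max : (ord_max : 'I_2) != ord0.
Proof. by []. Qed.

Lemma perm1 : perm_eq (enum [set A : {set 'I_2} | #|A| == 1%N])
   [:: [set ord0]; [set ord_max]].
Proof.
apply: uniq_perm; first exact: enum_uniq.
  rewrite /= andbT inE; apply/negP => /eqP/setP/(_ ord0).
  by rewrite !inE.
move=> A; rewrite mem_enum !inE; apply/idP/idP.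
  move/cards1P=> [x ->]; case: (I2cases x) => ->; by rewrite eqxx ?orbT.
by case/orP => /eqP ->; rewrite cards1.
Qed.

Lemma perm2 : perm_eq (enum [set A : {set 'I_2} | #|A| == 2%N]) [:: [set: 'I_2]].
Proof.
apply: uniq_perm; first exact: enum_uniq; first by [].
move=> A; rewrite mem_enum !inE; apply/idP/idP.
  move/eqP=> HA; rewrite eqEcard subsetT cardsT card_ord HA //.
by move/eqP ->; rewrite cardsT card_ord.
Qed.

Lemma elem1 (v : 'I_2 -> spair X) :
  elem 1 v = sadd (smul (v ord0) (sone X)) (sadd (smul (v ord_max) (sone X)) (szero X)).
Proof.
rewrite /elem; rewrite (ssum_perm _ _ (perm_map _ perm1)) /=.
by rewrite /image_mem !enum_set1.
Qed.

Lemma elem2 (v : 'I_2 -> spair X) :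
  elem 2 v = sadd (smul (v ord0) (smul (v ord_max) (sone X))) (szero X).
Proof.
rewrite /elem; rewrite (ssum_perm _ _ (perm_map _ perm2)) /=.
by rewrite /image_mem enum_setT -enumT enumI2.
Qed.


Definition f0 : {ffun 'I_2 -> nat} := [ffun j => if j == ord0 then 2%N else 0%N].
Definition f1 : {ffun 'I_2 -> nat} := [ffun j => if j == ord0 then 0%N else 2%N].
Definition PP : sexpr X 2 := [:: (sone X, f0); (sone X, f1)].

Lemma PP_sym : sym_expr PP.
Proof.
move=> s; rewrite /PP /= /perm_term /=.
have [E|E] := I2cases (s ord0).
  have Hs : forall j, (s j == ord0) = (j == ord0).
    by move=> j; rewrite -{1}E (inj_eq perm_inj).
  have -> : [ffun j => f0 (s j)] = f0 by apply/ffunP => j; rewrite !ffunE Hs.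
  have -> : [ffun j => f1 (s j)] = f1 by apply/ffunP => j; rewrite !ffunE Hs.
  exact: perm_refl.
have E' : s ord_max = ord0.
  case: (I2cases (s ord_max)) => // E2.
  have : (ord0 : 'I_2) = ord_max by apply: (@perm_inj _ s); rewrite E E2.
  by move/(congr1 val).
have Hs : forall j, (s j == ord0) = (j != ord0).
  move=> j; case: (I2cases j) => ->; by rewrite ?E ?E'.
have -> : [ffun j => f0 (s j)] = f1.
  by apply/ffunP => j; rewrite !ffunE Hs; case: (j == ord0).
have -> : [ffun j => f1 (s j)] = f0.
  by apply/ffunP => j; rewrite !ffunE Hs; case: (j == ord0).
by apply/permPl; exact: (perm_catC [:: (sone X, f1)] [:: (sone X, f0)]).
Qed.

Lemma eval_PP (v : 'I_2 -> spair X) :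
  eval_expr PP v = sadd (smul (sone X) (smul (spow (v ord0) 2) (smul (spow (v ord_max) 0) (sone X))))
    (sadd (smul (sone X) (smul (spow (v ord0) 0) (smul (spow (v ord_max) 2) (sone X)))) (szero X)).
Proof. by rewrite /eval_expr /eval_term /= enumI2 /= !ffunE. Qed.

Definition v1 (j : 'I_2) : spair X := if j == ord0 then (1, 1) else (0, 0).
Definition v2 (j : 'I_2) : spair X := if j == ord0 then (1, 0) else (0, 1).

Lemma FE_trivial : fully_elementary X -> (1 : X) = 0.
Proof.
move=> FE; case: (eqVneq (1 : X) 0) => // H10; exfalso.
have [r Hr] := FE 2%N PP PP_sym.
have H1 := Hr v1; have H2 := Hr v2.
set V1 := eval_expr r _ in H1.
set V2 := eval_expr r _ in H2.
have Hle : sle V1 V2.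
  apply: sle_eval => j; case: (I2cases j) => ->.
    rewrite !elem1 /v1 /v2 /=.
    exists (szero X); apply: spairP; rewrite /= !(mulr1, mul1r, mulr0, mul0r, addr0, add0r) ?Hidem //.
  change (sle (elem 2 v1) (elem 2 v2)).
  have -> : elem 2 v1 = szero X.
    rewrite elem2 /v1 /=.
    apply: spairP => /=; ring.
  exact: sle0.
have EP1 : eval_expr PP v1 = (1, 1).
  rewrite eval_PP /v1 /=.
  apply: spairP => /=; rewrite !(mulr1, mul1r, mulr0, mul0r, addr0, add0r) ?Hidem //.
have EP2 : eval_expr PP v2 = (1, 0).
  rewrite eval_PP /v2 /=.
  apply: spairP => /=; rewrite !(mulr1, mul1r, mulr0, mul0r, addr0, add0r) ?Hidem //.
rewrite EP1 in H1; rewrite EP2 in H2.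
have HV1 : V1 = (1, 1).
  case: H1 => [<- //|[/= H _]]; by [].
case: Hle => g; rewrite HV1 => HV2; rewrite HV2 /sadd /= in H2.
case: H2 => [[_ H]|[_ [H H']] ].
  move/eqP: H10; apply.
  by rewrite -{1}[1]addr0 H addrA Hidem.
apply: H; rewrite /= in H' *.
by rewrite -[1 + g.1]add0r -H' addrA Hidem.
Qed.


Lemma Frob_trivial : frobenius X -> (1 : X) = 0.
Proof.
move=> F; have := F (1, 0) (0, 1) 2%N isT.
case=> [E|[E _]].
  have := congr1 snd E; rewrite /= !(mulr1, mul1r, mulr0, mul0r, addr0, add0r) ?Hidem //.
exfalso; apply: E; rewrite /= !(mulr1, mul1r, mulr0, mul0r, addr0, add0r) ?Hidem //.
Qed.

Lemma triv_all : (1 : X) = 0 -> forall x : X, x = 0.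
Proof. by move=> H x; rewrite -[x]mulr1 H mulr0. Qed.

Lemma triv_pairs : (forall x : X, x = 0) -> forall p q : spair X, p = q.
Proof. by move=> H [a b] [c d]; rewrite (H a) (H b) (H c) (H d). Qed.

End Aux.

Theorem proposition6p4 (X : comPzSemiRingType)
  (Hidem : idempotent_sr X) (Hlin : linear_intrinsic X) (Hmono : mono_cond X) :
  (fully_elementary X <-> frobenius X) /\ (frobenius X <-> forall x : X, x = 0).
Proof.
have T1 : (forall x : X, x = 0) -> fully_elementary X.
  move=> H n P _; exists [::] => v; left; exact: triv_pairs.
have T2 : (forall x : X, x = 0) -> frobenius X.
  move=> H x y n _; left; exact: triv_pairs.
split; split.
- by move/(@FE_trivial X Hidem)/(@triv_all X); apply: T2.
- by move/(@Frob_trivial X Hidem)/(@triv_all X); apply: T1.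
- by move/(@Frob_trivial X Hidem)/(@triv_all X).
- exact: T2.
Qed.
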